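(* Let $K,N$ be homogeneous bi-variate means and $G(s,t)=\sqrt{st}$. If $G$ is $(K,N)$-stabilized, i.e. $G(s,t)=K\big(N(s,G(s,t)),N(G(s,t),t)\big)$ for all $s,t>0$, then $G(s,t)=N(\sqrt s,\sqrt t)\,K(\sqrt s,\sqrt t)$ for all $s,t>0$, $G$ is also $(N,K)$-stabilized, and $N(s,t)K(s,t)=st$, i.e. $G\big(N(s,t),K(s,t)\big)=G(s,t)$, for all $s,t>0$.
   Context: A bi-variate mean is $M:(0,\infty)^2\to(0,\infty)$ with $\min(s,t)\le M(s,t)\le\max(s,t)$; homogeneous means $M(\lambda s,\lambda t)=\lambda M(s,t)$ for $\lambda,s,t>0$. $M$ is $(K,N)$-stabilized if $M(s,t)=K\big(N(s,M(s,t)),N(M(s,t),t)\big)$ for all $s,t>0$. *)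

(* Defs.v *)
From Stdlib Require Import Reals.
Open Scope R_scope.

(* A bi-variate mean on (0,oo)^2, represented by a total function R -> R -> R
   whose values off (0,oo)^2 are irrelevant. *)
Definition is_mean (M : R -> R -> R) : Prop :=
  forall s t, 0 < s -> 0 < t ->
    0 < M s t /\ Rmin s t <= M s t /\ M s t <= Rmax s t.

Definition is_homogeneous (M : R -> R -> R) : Prop :=
  forall l s t, 0 < l -> 0 < s -> 0 < t -> M (l * s) (l * t) = l * M s t.

Definition stabilized (M K N : R -> R -> R) : Prop :=
  forall s t, 0 < s -> 0 < t -> M s t = K (N s (M s t)) (N (M s t) t).

Definition Gm (s t : R) : R := sqrt (s * t).

(* Main.v *)
Require Import Defs.
From Stdlib Require Import Reals Lra.
Open Scope R_scope.

Lemma Gsq a b : 0 < a -> 0 < b -> Gm (a*a) (b*b) = a*b.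
Proof.
  intros; unfold Gm. replace (a*a*(b*b)) with ((a*b)*(a*b)) by ring.
  apply sqrt_square. nra.
Qed.

Lemma key (K N : R -> R -> R) :
  is_mean K -> is_homogeneous K ->
  is_mean N -> is_homogeneous N ->
  stabilized Gm K N ->
  forall a b, 0 < a -> 0 < b -> N a b * K a b = a * b.
Proof.
  intros mK hK mN hN st a b Ha Hb.
  pose proof (st (a*a) (b*b) ltac:(nra) ltac:(nra)) as E.
  rewrite Gsq in E by lra.
  rewrite (hN a a b Ha Ha Hb) in E.
  rewrite (Rmult_comm a b) in E at 2.
  rewrite (hN b a b Hb Ha Hb) in E.
  destruct (mN a b Ha Hb) as [Hn _].
  rewrite (Rmult_comm a (N a b)), (Rmult_comm b (N a b)) in E.
  rewrite (hK _ a b Hn Ha Hb) in E. lra.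
Qed.

Theorem mainTheorem11 (K N : R -> R -> R) :
  is_mean K -> is_homogeneous K ->
  is_mean N -> is_homogeneous N ->
  stabilized Gm K N ->
  (forall s t, 0 < s -> 0 < t -> Gm s t = N (sqrt s) (sqrt t) * K (sqrt s) (sqrt t)) /\
  stabilized Gm N K /\
  (forall s t, 0 < s -> 0 < t ->
     N s t * K s t = s * t /\ Gm (N s t) (K s t) = Gm s t).
Proof.
  intros mK hK mN hN st.
  pose proof (key K N mK hK mN hN st) as Hk.
  split; [|split].
  - intros s t Hs Ht.
    rewrite Hk by (apply sqrt_lt_R0; lra).
    unfold Gm. rewrite sqrt_mult; lra.
  - intros s t Hs Ht.
    pose (a := sqrt s). pose (b := sqrt t).
    assert (Ha : 0 < a) by (apply sqrt_lt_R0; lra).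
    assert (Hb : 0 < b) by (apply sqrt_lt_R0; lra).
    assert (Es : s = a*a) by (symmetry; apply sqrt_sqrt; lra).
    assert (Et : t = b*b) by (symmetry; apply sqrt_sqrt; lra).
    rewrite Es, Et. rewrite Gsq by lra.
    rewrite (hK a a b Ha Ha Hb).
    rewrite (Rmult_comm a b) at 2.
    rewrite (hK b a b Hb Ha Hb).
    destruct (mK a b Ha Hb) as [Hn _].
    rewrite (Rmult_comm a (K a b)), (Rmult_comm b (K a b)).
    rewrite (hN _ a b Hn Ha Hb).
    rewrite (Rmult_comm (K a b)), Hk; lra.
  - intros s t Hs Ht. rewrite Hk by lra. split; [reflexivity|].
    unfold Gm. rewrite Hk by lra. reflexivity.
Qed.
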